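(* Let $k$ be an algebraically closed field complete with respect to a nontrivial non-Archimedean absolute value, with residue field $\tilde k$ of characteristic $p > 0$. Let $\varphi \in k(z)$ be a nonconstant rational function with good reduction such that all of the critical points of $\varphi$ have the same image in $\mathbb{P}^1(\tilde k)$ under the reduction map. Then $\deg(\varphi) \equiv 0$ or $1 \pmod p$.
   Context: $\mathcal{O}_k = \{x \in k : |x| \leq 1\}$, $\mathfrak{m} = \{x : |x| < 1\}$, $\tilde k = \mathcal{O}_k/\mathfrak{m}$. The reduction map $\mathrm{red} : \mathbb{P}^1(k) \to \mathbb{P}^1(\tilde k)$ sends $x \in \mathcal{O}_k$ to $x \bmod \mathfrak{m}$ and all other points to $\infty$. Write $\varphi = f/g$ with $f, g \in \mathcal{O}_k[z]$ having no common root and with some coefficient of $f$ or $g$ of absolute value $1$; let $\tilde f, \tilde g \in \tilde k[z]$ be their reductions. The reduction $\tilde\varphi$ is $\tilde f/\tilde g$ if $\tilde g \neq 0$ and the constant $\infty$ otherwise. $\varphi$ has good reduction if $\deg(\varphi) = \deg(\tilde \varphi)$. Critical points of $\varphi$ are the points $x \in \mathbb{P}^1(k)$ at which the derivative of $\sigma \circ \varphi$ (in a local coordinate at $x$, i.e. $z$ if $x$ finite and $1/z$ if $x=\infty$) vanishes, for a fractional linear $\sigma$ with $\sigma(\varphi(x)) \neq \infty$. *)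

(* Defs.v *)
From HB Require Import structures.
From mathcomp Require Import all_boot all_order all_algebra.
From mathcomp Require Import reals.
Set Implicit Arguments. Unset Strict Implicit. Unset Printing Implicit Defensive.
Import Order.TTheory GRing.Theory Num.Theory.
Local Open Scope ring_scope.

Definition nonarch_abs (R : realType) (k : fieldType) (abs : k -> R) : Prop :=
  [/\ forall x, 0 <= abs x,
      forall x, abs x = 0 <-> x = 0,
      forall x y, abs (x * y) = abs x * abs y,
      forall x y, abs (x + y) <= Num.max (abs x) (abs y)
    & exists x, abs x != 0 /\ abs x != 1].

Definition abs_complete (R : realType) (k : fieldType) (abs : k -> R) : Prop :=
  forall u : nat -> k,
    (forall e : R, 0 < e -> exists N, forall m n, (N <= m)%N -> (N <= n)%N ->
        abs (u m - u n) < e) ->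
    exists l, forall e : R, 0 < e -> exists N, forall n, (N <= n)%N ->
        abs (u n - l) < e.

(* red : k -> kt restricted to O_k = {|x| <= 1} is a surjective ring
   morphism onto kt with kernel m = {|x| < 1}; i.e. kt is (isomorphic to)
   the residue field O_k / m and red is the quotient map. *)
Definition residue_map (R : realType) (k kt : fieldType) (abs : k -> R)
    (red : k -> kt) : Prop :=
  [/\ forall x y, abs x <= 1 -> abs y <= 1 -> red (x + y) = red x + red y,
      forall x y, abs x <= 1 -> abs y <= 1 -> red (x * y) = red x * red y,
      red 1 = 1,
      forall x, abs x <= 1 -> (red x == 0) = (abs x < 1)
    & forall y : kt, exists x, abs x <= 1 /\ red x = y].

(* Reduction map P^1(k) -> P^1(kt); P^1 is [option _], [None] = infinity. *)
Definition red_pt (R : realType) (k kt : fieldType) (abs : k -> R)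
    (red : k -> kt) (x : option k) : option kt :=
  match x with
  | Some z => if abs z <= 1 then Some (red z) else None
  | None => None
  end.

(* Degree of the rational function f/g (the constant infinity if g = 0):
   max of the degrees of numerator and denominator in lowest terms. *)
Definition rdeg (F : fieldType) (f g : {poly F}) : nat :=
  if g == 0 then 0%N
  else maxn (size (f %/ gcdp f g)).-1 (size (g %/ gcdp f g)).-1.

(* w^d p(1/w), for deg p <= d. *)
Definition revd (F : fieldType) (d : nat) (p : {poly F}) : {poly F} :=
  \poly_(i < d.+1) p`_(d - i).

(* The derivative of N/D vanishes at x, where D(x) <> 0:
   (N/D)' = (N' D - N D') / D^2. *)
Definition deriv_vanishes (F : fieldType) (N D : {poly F}) (x : F) : Prop :=
  D.[x] != 0 /\ (N^`() * D - N * D^`()).[x] = 0.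

(* x in P^1(k) is a critical point of phi = f/g: for some fractional linear
   sigma(w) = (a w + b)/(c w + d) with sigma(phi(x)) <> infinity, the
   derivative of sigma o phi = (a f + b g)/(c f + d g) in the local coordinate
   at x (z if x finite, 1/z if x = infinity) vanishes. *)
Definition critical_point (F : fieldType) (f g : {poly F}) (x : option F) : Prop :=
  exists a b c d : F, a * d - b * c != 0 /\
    let N := a *: f + b *: g in
    let D := c *: f + d *: g in
    match x with
    | Some z => deriv_vanishes N D z
    | None => deriv_vanishes (revd (rdeg f g) N) (revd (rdeg f g) D) 0
    end.

(* Main.v *)
Require Import Defs.
From HB Require Import structures.
From mathcomp Require Import all_boot all_order all_algebra.
From mathcomp Require Import reals.
From mathcomp Require Import ring lra zify.
Import Order.TTheory GRing.Theory Num.Theory.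
Local Open Scope ring_scope.



Lemma size_deriv_le {K : nzSemiRingType} (F : {poly K}) :
  (size F^`() <= (size F).-1)%N.
Proof.
have [->|nz] := eqVneq F 0; first by rewrite deriv0 size_poly0.
by have := lt_size_deriv nz; case: (size F).
Qed.

Lemma key_coef (K : fieldType) (F G : {poly K}) (a : K) (m d : nat) :
  coprimep F G -> size F = d.+3 ->
  ('X - a%:P) * (F^`() * G - F * G^`())^`() = (F^`() * G - F * G^`()) * (m%:R)%:P ->
  F`_d.+2 *+ d.+2 *+ d.+1 = (m%:R) * (F`_d.+2 *+ d.+2).
Proof.
move=> cop sF hyp.
set T := fun H : {poly K} => ('X - a%:P) * H^`()^`() - H^`() * (m%:R)%:P.
have E : G * T F = F * T G.
  move: hyp; rewrite /T derivB !derivM => hyp.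
  apply/eqP; rewrite -subr_eq0; apply/eqP.
  transitivity (('X - a%:P) * (F^`()^`() * G + F^`() * G^`() - (F^`() * G^`() + F * G^`()^`()))
     - (F^`() * G - F * G^`()) * (m%:R)%:P); last by rewrite hyp subrr.
  ring.
have dv : F %| T F by rewrite -(Gauss_dvdpr _ cop) E dvdp_mulr.
have TF0 : T F = 0.
  apply/eqP; apply: contraTT dv => nz.
  have : (size (T F) < size F)%N.
    rewrite /T; apply: (leq_ltn_trans (size_polyD _ _)).
    rewrite size_polyN gtn_max; apply/andP; split.
      apply: (leq_ltn_trans (size_polyMleq _ _)); rewrite (_ : size (@GRing.add _ (polyX K) (- a%:P)) = 2%N); last exact: size_XsubC.
      rewrite add2n /= sF ltnS; apply: (leq_trans (size_deriv_le _)).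
      by have := size_deriv_le F; rewrite sF; case: (size F^`()).
    rewrite mulrC mul_polyC; apply: (leq_ltn_trans (size_scale_leq _ _)).
    by have := size_deriv_le F; rewrite sF.
  by move=> lt; apply/negP => /(dvdp_leq nz); rewrite leqNgt lt.
have := congr1 (fun P : {poly K} => P`_d.+1) TF0.
rewrite /T coefB mulrBl coefB coefXM coefCM coefMC /= !coef_deriv.
rewrite (nth_default 0 (_ : size F <= d.+1.+1.+1)%N); last by rewrite sF.
rewrite !mul0rn mulr0 subr0 coef0 => /eqP; rewrite subr_eq0 => /eqP ->.
by rewrite mulrC.
Qed.

Lemma nat_final (p d : nat) : prime p -> (p %| d.+2 * d.+1)%N ->
  (d.+2 %% p == 0)%N || (d.+2 %% p == 1)%N.
Proof.
move=> pp; rewrite Euclid_dvdM // => /orP [h|h].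
  by apply/orP; left.
apply/orP; right; move: h => /dvdnP [q hq].
rewrite -addn1 hq modnMDl modn_small //.
exact: prime_gt1.
Qed.

Lemma kt_final (K : fieldType) (p : nat) (F G : {poly K}) (a : K) (m d : nat) :
  p \in [pchar K] -> coprimep F G -> (size F = d.+3 \/ size G = d.+3) ->
  ('X - a%:P) * (F^`() * G - F * G^`())^`() = (F^`() * G - F * G^`()) * (m%:R)%:P ->
  (m = 0 \/ m = 2 * d.+2 - 2)%N ->
  (d.+2 %% p == 0)%N || (d.+2 %% p == 1)%N.
Proof.
move=> pc cop hs hyp hm.
have [H [cop' sH key]] : exists H : {poly K}, [/\ exists H', coprimep H H' ,
     size H = d.+3 & H`_d.+2 *+ d.+2 *+ d.+1 = (m%:R) * (H`_d.+2 *+ d.+2)].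
  case: hs => hs.
    by exists F; split; [exists G | | exact: key_coef cop hs hyp].
  exists G; split; [exists F; by rewrite coprimep_sym | by [] |].
  apply: (@key_coef K G F a m d) => //; first by rewrite coprimep_sym.
  apply: (can_inj (@opprK _)).
  have e : G^`() * F - G * F^`() = - (F^`() * G - F * G^`()) by ring.
  by rewrite e derivN mulrN hyp mulNr.
have x0 : H`_d.+2 != 0.
  have := lead_coef_eq0 H; rewrite lead_coefE sH /= => ->.
  by rewrite -size_poly_eq0 sH.
set x := H`_d.+2 in x0 key.
have y0 : x *+ d.+2 *+ d.+1 = 0.
  case: hm => hm; move: key; rewrite hm.
    by rewrite mul0r.
  rewrite (_ : (2 * d.+2 - 2 = d.+1 * 2)%N); last by lia.
  rewrite mulr_natl mulrnA => key.
  apply: (addrI (x *+ d.+2 *+ d.+1)); by rewrite addr0 -mulr2n -key.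
apply: nat_final; first exact: pcharf_prime pc.
rewrite (dvdn_pcharf pc); move: y0; rewrite -mulrnA -(mulr_natr x) => /eqP.
by rewrite mulf_eq0 (negPf x0).
Qed.

Lemma rdeg_cop (K : fieldType) (F G : {poly K}) (n : nat) :
  (size F <= n.+1)%N -> (size G <= n.+1)%N -> rdeg F G = n -> (0 < n)%N ->
  coprimep F G /\ (size F = n.+1 \/ size G = n.+1).
Proof.
move=> hF hG; rewrite /rdeg.
have [->|G0] := eqVneq G 0; first by move=> <-.
have h0 : gcdp F G != 0 by rewrite gcdp_eq0 negb_and G0 orbT.
rewrite !size_divp //.
have : (0 < size (gcdp F G))%N by rewrite size_poly_gt0.
rewrite coprimep_def.
move: (size (gcdp F G)) (size F) (size G) hF hG => s a b ha hb hs.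
case: (ltngtP s 1%N) => [h|hs1|->].
- by exfalso; lia.
- move=> e n0; exfalso; move: e; lia.
- move=> e n0; split => //; lia.
Qed.

Lemma rdeg_closed (k : closedFieldType) (f g : {poly k}) :
  (forall z : k, ~ (root f z /\ root g z)) -> g != 0 ->
  rdeg f g = maxn (size f).-1 (size g).-1.
Proof.
move=> nc g0; rewrite /rdeg (negPf g0).
have h0 : gcdp f g != 0 by rewrite gcdp_eq0 negb_and g0 orbT.
have s1 : size (gcdp f g) = 1%N.
  apply/eqP; apply/negPn/negP => /closed_rootP [z hz].
  apply: (nc z); split.
    by apply: (root_dvdp (dvdp_gcdl f g)).
  by apply: (root_dvdp (dvdp_gcdr f g)).
by rewrite !size_divp // s1 !subn0.
Qed.



Lemma abs0 {R : realType} {k : fieldType} {abs : k -> R} :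
  nonarch_abs abs -> abs 0 = 0.
Proof. by case=> _ h _ _ _; apply/h. Qed.

Lemma abs1 {R : realType} {k : fieldType} {abs : k -> R} :
  nonarch_abs abs -> abs 1 = 1.
Proof.
case=> _ h hm _ _.
have n0 : abs 1 != 0 by apply/eqP => /h /eqP; rewrite oner_eq0.
have := hm 1 1; rewrite mulr1 => /eqP; rewrite -subr_eq0.
rewrite -{1}(mulr1 (abs 1)) -mulrBr mulf_eq0 (negPf n0) /= subr_eq0 => /eqP.
by move=> <-.
Qed.

Lemma absN {R : realType} {k : fieldType} {abs : k -> R} x :
  nonarch_abs abs -> abs (- x) = abs x.
Proof.
move=> H; have H' := H; case: H => hp h hm _ _.
have a1 : abs (-1) = 1.
  have e : abs (-1) * abs (-1) = 1 by rewrite -hm mulrNN mulr1 (abs1 H').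
  have p0 := hp (-1).
  have : (abs (-1) - 1) * (abs (-1) + 1) = 0 by rewrite mulrDr !mulrBl e; ring.
  move/eqP; rewrite mulf_eq0 => /orP [|]; first by rewrite subr_eq0 => /eqP.
  move=> /eqP e2; exfalso; move: p0; rewrite (_ : abs (-1) = -1); last first.
    by apply/eqP; rewrite -subr_eq0 opprK e2.
  by rewrite ler0N1.
by rewrite -mulN1r hm a1 mul1r.
Qed.

Lemma abs1_le {R : realType} {k : fieldType} {abs : k -> R} :
  nonarch_abs abs -> abs 1 <= 1.
Proof. by move=> H; rewrite (abs1 H). Qed.

Lemma absD1 {R : realType} {k : fieldType} {abs : k -> R} x y :
  nonarch_abs abs -> abs x <= 1 -> abs y <= 1 -> abs (x + y) <= 1.
Proof.
case=> _ _ _ hu _ hx hy; apply: (le_trans (hu x y)).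
by rewrite ge_max hx hy.
Qed.

Lemma absM1 {R : realType} {k : fieldType} {abs : k -> R} x y :
  nonarch_abs abs -> abs x <= 1 -> abs y <= 1 -> abs (x * y) <= 1.
Proof.
case=> hp _ hm _ _ hx hy; rewrite hm.
by rewrite -(mulr1 1) ler_pM.
Qed.

Lemma absN1 {R : realType} {k : fieldType} {abs : k -> R} x :
  nonarch_abs abs -> abs x <= 1 -> abs (- x) <= 1.
Proof. by move=> H; rewrite absN. Qed.

Lemma absMn1 {R : realType} {k : fieldType} {abs : k -> R} x n :
  nonarch_abs abs -> abs x <= 1 -> abs (x *+ n) <= 1.
Proof.
move=> H hx; elim: n => [|n IH]; first by rewrite mulr0n (abs0 H).
by rewrite mulrS absD1.
Qed.

Lemma abs_sum1 {R : realType} {k : fieldType} {abs : k -> R} n (F : 'I_n -> k) :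
  nonarch_abs abs -> (forall i, abs (F i) <= 1) -> abs (\sum_(i < n) F i) <= 1.
Proof.
move=> H hF; apply: (big_ind (fun x => abs x <= 1)).
- by rewrite (abs0 H).
- by move=> x y; apply: absD1.
- by move=> i _.
Qed.

Lemma red0 {R : realType} {k kt : fieldType} {abs : k -> R} {red : k -> kt} :
  nonarch_abs abs -> residue_map abs red -> red 0 = 0.
Proof.
move=> H [ha _ _ _ _].
have h01 : abs 0 <= 1 by rewrite (abs0 H).
have := ha 0 0 h01 h01; rewrite addr0 => e.
by apply: (addrI (red 0)); rewrite addr0 -e.
Qed.

Lemma redN {R : realType} {k kt : fieldType} {abs : k -> R} {red : k -> kt} x :
  nonarch_abs abs -> residue_map abs red -> abs x <= 1 -> red (- x) = - red x.
Proof.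
move=> H Hr hx; have := Hr; case=> ha _ _ _ _.
have := ha x (- x) hx; rewrite absN // subrr (red0 H Hr) => /(_ hx) /eqP.
by rewrite eq_sym addr_eq0 => /eqP ->; rewrite opprK.
Qed.

Lemma redMn {R : realType} {k kt : fieldType} {abs : k -> R} {red : k -> kt} x n :
  nonarch_abs abs -> residue_map abs red -> abs x <= 1 -> red (x *+ n) = red x *+ n.
Proof.
move=> H Hr hx; have := Hr; case=> ha _ _ _ _.
elim: n => [|n IH]; first by rewrite !mulr0n (red0 H Hr).
by rewrite !mulrS ha ?IH // absMn1.
Qed.

Lemma red_sum {R : realType} {k kt : fieldType} {abs : k -> R} {red : k -> kt} n
   (F : 'I_n -> k) :
  nonarch_abs abs -> residue_map abs red -> (forall i, abs (F i) <= 1) ->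
  red (\sum_(i < n) F i) = \sum_(i < n) red (F i).
Proof.
move=> H Hr; have := Hr; case=> ha _ _ _ _.
elim: n F => [|n IH] F hF; first by rewrite !big_ord0 (red0 H Hr).
rewrite !big_ord_recr /= ha ?IH //; last by apply: abs_sum1.
Qed.

Definition intp {R : realType} {k : fieldType} (abs : k -> R) (P : {poly k}) :=
  forall i, abs P`_i <= 1.

Lemma intpD {R : realType} {k : fieldType} {abs : k -> R} (P Q : {poly k}) : @nonarch_abs R k abs ->
  intp abs P -> intp abs Q -> intp abs (P + Q).
Proof. by move=> H hP hQ i; rewrite coefD absD1. Qed.

Lemma intpN {R : realType} {k : fieldType} {abs : k -> R} (P : {poly k}) : @nonarch_abs R k abs ->
  intp abs P -> intp abs (- P).
Proof. by move=> H hP i; rewrite coefN absN. Qed.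

Lemma intpB {R : realType} {k : fieldType} {abs : k -> R} (P Q : {poly k}) : @nonarch_abs R k abs ->
  intp abs P -> intp abs Q -> intp abs (P - Q).
Proof. by move=> H hP hQ; apply: intpD => //; apply: intpN. Qed.

Lemma intpM {R : realType} {k : fieldType} {abs : k -> R} (P Q : {poly k}) : @nonarch_abs R k abs ->
  intp abs P -> intp abs Q -> intp abs (P * Q).
Proof.
move=> H hP hQ i; rewrite coefM; apply: abs_sum1 => // j.
exact: absM1.
Qed.

Lemma intp_deriv {R : realType} {k : fieldType} {abs : k -> R} (P : {poly k}) : @nonarch_abs R k abs ->
  intp abs P -> intp abs P^`().
Proof. by move=> H hP i; rewrite coef_deriv absMn1. Qed.

Lemma intpC {R : realType} {k : fieldType} {abs : k -> R} (c : k) : @nonarch_abs R k abs ->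
  abs c <= 1 -> intp abs c%:P.
Proof. by move=> H hc i; rewrite coefC; case: (i == 0)%N => //; rewrite (abs0 H). Qed.

Lemma intpX {R : realType} {k : fieldType} {abs : k -> R} : @nonarch_abs R k abs -> intp abs 'X.
Proof.
move=> H i; rewrite coefX; case: (i == 1)%N => /=; first by rewrite mulr1n (abs1 H).
by rewrite ?mulr0n (abs0 H).
Qed.

Lemma intp_prod {R : realType} {k : fieldType} {abs : k -> R} (I : eqType) (s : seq I) (F : I -> {poly k}) :
  @nonarch_abs R k abs -> (forall i, i \in s -> intp abs (F i)) ->
  intp abs (\prod_(i <- s) F i).
Proof.
move=> H; elim: s => [|x s IH] hs.
  by rewrite big_nil -polyC1; apply: intpC => //; exact: abs1_le.
rewrite big_cons; apply: intpM => //; first by apply: hs; rewrite mem_head.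
by apply: IH => i hi; apply: hs; rewrite in_cons hi orbT.
Qed.


Lemma mapD {R : realType} {k kt : fieldType} {abs : k -> R} {red : k -> kt} (P Q : {poly k}) :
  nonarch_abs abs -> residue_map abs red -> intp abs P -> intp abs Q ->
  map_poly red (P + Q) = map_poly red P + map_poly red Q.
Proof.
move=> H Hr hP hQ; have := Hr; case=> ha _ _ _ _.
apply/polyP => i; rewrite coefD !coef_map_id0 ?(red0 H Hr) //.
by rewrite coefD ha.
Qed.

Lemma mapN {R : realType} {k kt : fieldType} {abs : k -> R} {red : k -> kt} (P : {poly k}) :
  nonarch_abs abs -> residue_map abs red -> intp abs P ->
  map_poly red (- P) = - map_poly red P.
Proof.
move=> H Hr hP.
apply/polyP => i; rewrite coefN !coef_map_id0 ?(red0 H Hr) //.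
by rewrite coefN (redN _ H Hr).
Qed.

Lemma mapB {R : realType} {k kt : fieldType} {abs : k -> R} {red : k -> kt} (P Q : {poly k}) :
  nonarch_abs abs -> residue_map abs red -> intp abs P -> intp abs Q ->
  map_poly red (P - Q) = map_poly red P - map_poly red Q.
Proof.
move=> H Hr hP hQ; rewrite (mapD _ _ H Hr) ?(mapN _ H Hr) //; exact: intpN.
Qed.

Lemma mapM {R : realType} {k kt : fieldType} {abs : k -> R} {red : k -> kt} (P Q : {poly k}) :
  nonarch_abs abs -> residue_map abs red -> intp abs P -> intp abs Q ->
  map_poly red (P * Q) = map_poly red P * map_poly red Q.
Proof.
move=> H Hr hP hQ; have := Hr; case=> _ hm _ _ _.
apply/polyP => i; rewrite coefM !coef_map_id0 ?(red0 H Hr) //.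
rewrite coefM (red_sum _ _ H Hr); last by move=> j; apply: absM1.
by apply: eq_bigr => j _; rewrite hm // !coef_map_id0 // (red0 H Hr).
Qed.

Lemma map_deriv {R : realType} {k kt : fieldType} {abs : k -> R} {red : k -> kt} (P : {poly k}) :
  nonarch_abs abs -> residue_map abs red -> intp abs P ->
  map_poly red P^`() = (map_poly red P)^`().
Proof.
move=> H Hr hP.
apply/polyP => i; rewrite coef_deriv !coef_map_id0 ?(red0 H Hr) //.
by rewrite coef_deriv (redMn _ _ H Hr).
Qed.

Lemma mapC {R : realType} {k kt : fieldType} {abs : k -> R} {red : k -> kt} (c : k) :
  nonarch_abs abs -> residue_map abs red ->
  map_poly red c%:P = (red c)%:P.
Proof.
move=> H Hr; apply/polyP => i; rewrite coef_map_id0 ?(red0 H Hr) // !coefC.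
by case: (i == 0)%N; rewrite ?(red0 H Hr).
Qed.

Lemma mapX {R : realType} {k kt : fieldType} {abs : k -> R} {red : k -> kt} :
  nonarch_abs abs -> residue_map abs red ->
  map_poly red 'X = 'X.
Proof.
move=> H Hr; have := Hr; case=> _ _ h1 _ _.
apply/polyP => i; rewrite !coef_map_id0 ?(red0 H Hr) // !coefX.
by case: (i == 1)%N => /=; rewrite ?mulr1n ?mulr0n ?h1 ?(red0 H Hr).
Qed.

Lemma map_prod {R : realType} {k kt : fieldType} {abs : k -> R} {red : k -> kt}
   (I : eqType) (s : seq I) (F : I -> {poly k}) :
  nonarch_abs abs -> residue_map abs red -> (forall i, i \in s -> intp abs (F i)) ->
  map_poly red (\prod_(i <- s) F i) = \prod_(i <- s) map_poly red (F i).
Proof.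
move=> H Hr; have := Hr; case=> _ _ h1 _ _.
elim: s => [|x s IH] hs.
  by rewrite !big_nil -polyC1 (mapC _ H Hr) h1.
rewrite !big_cons (mapM _ _ H Hr) //; first by rewrite IH // => i hi; apply: hs; rewrite in_cons hi orbT.
  by apply: hs; rewrite mem_head.
by apply: intp_prod => // i hi; apply: hs; rewrite in_cons hi orbT.
Qed.


Lemma coefM_top {K : fieldType} (p q : {poly K}) (e : nat) :
  (size p <= e.+2)%N -> (size q <= e.+3)%N ->
  (p * q)`_(e + e).+2 = p`_e * q`_e.+2 + p`_e.+1 * q`_e.+1.
Proof.
move=> hp hq; rewrite coefM.
rewrite (bigD1 (inord e)) // (bigD1 (inord e.+1)); last first.
  by apply/eqP => /(congr1 val); rewrite /= !inordK //; lia.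
have h1 : (e < (e + e).+3)%N by lia.
have h2 : (e.+1 < (e + e).+3)%N by lia.
rewrite (inordK h1) (inordK h2).
rewrite (_ : ((e + e).+2 - e = e.+2)%N); last by lia.
rewrite (_ : ((e + e).+2 - e.+1 = e.+1)%N); last by lia.
rewrite big1; first by rewrite /= addr0.
move=> j /andP [/andP [_ hj1] hj2].
have hj1' : (val j != e).
  by apply: contraNneq hj1 => hj; apply/eqP/val_inj; rewrite /= inordK // -hj.
have hj2' : (val j != e.+1).
  by apply: contraNneq hj2 => hj; apply/eqP/val_inj; rewrite /= inordK // -hj.
have [lt|ge] := ltnP (val j) e.
  rewrite [q`_ _]nth_default ?mulr0 //; apply: (leq_trans hq).
  move: lt; clear hj1 hj2; case: j hj1' hj2' => j hj /= *; lia.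
rewrite [p`_ _]nth_default ?mul0r //; apply: (leq_trans hp).
move: ge; clear hj1 hj2; case: j hj1' hj2' => j hj /= *; lia.
Qed.

Lemma W_top {K : fieldType} (F G : {poly K}) (e : nat) :
  (size F <= e.+3)%N -> (size G <= e.+3)%N ->
  (F^`() * G - F * G^`())`_(e + e).+2 = F`_e.+2 * G`_e.+1 - F`_e.+1 * G`_e.+2.
Proof.
move=> hF hG.
have hF' : (size F^`() <= e.+2)%N by apply: (leq_trans (size_deriv_le F)); case: (size F) hF.
have hG' : (size G^`() <= e.+2)%N by apply: (leq_trans (size_deriv_le G)); case: (size G) hG.
rewrite coefB (coefM_top F^`() G e) // [F * _]mulrC (coefM_top G^`() F e) // !coef_deriv.
rewrite !mulrSr.
ring.
Qed.

Lemma revd_coef0 {K : fieldType} (d : nat) (P : {poly K}) : (revd d P)`_0 = P`_d.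
Proof. by rewrite /revd coef_poly /= subn0. Qed.

Lemma revd_coef1 {K : fieldType} (d : nat) (P : {poly K}) : (revd d.+1 P)`_1 = P`_d.
Proof. by rewrite /revd coef_poly /= subSS subn0. Qed.

Lemma crit_inf {K : fieldType} (f g : {poly K}) (e : nat) :
  rdeg f g = e.+2 -> (size f <= e.+3)%N -> (size g <= e.+3)%N ->
  (size f = e.+3 \/ size g = e.+3) ->
  (f^`() * g - f * g^`())`_(e + e).+2 = 0 -> critical_point f g None.
Proof.
move=> hd hf hg hs hW; rewrite /critical_point hd.
rewrite W_top // in hW.
have [g0|gn0] := eqVneq g`_e.+2 0.
- have f0 : f`_e.+2 != 0.
    case: hs => hs.
      have := lead_coef_eq0 f; rewrite lead_coefE hs /= => ->.
      by rewrite -size_poly_eq0 hs.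
    have := lead_coef_eq0 g; rewrite lead_coefE hs /= g0 eqxx.
    by move/esym/eqP => g00; move: hs; rewrite g00 size_poly0.
  exists 0, 1, 1, 0; split; first by rewrite mul0r mul1r sub0r oppr_eq0 oner_eq0.
  rewrite /= !scale1r !scale0r add0r addr0.
  split; first by rewrite horner_coef0 revd_coef0.
  rewrite horner_coef0 coefB !coef0M !coef_deriv !revd_coef1 !revd_coef0 !mulr1n.
  by rewrite g0 mul0r subr0 mulrC; move: hW; rewrite g0 mulr0 subr0.
- exists 1, 0, 0, 1; split; first by rewrite mul0r mul1r subr0 oner_eq0.
  rewrite /= !scale1r !scale0r add0r addr0.
  split; first by rewrite horner_coef0 revd_coef0.
  rewrite horner_coef0 coefB !coef0M !coef_deriv !revd_coef1 !revd_coef0 !mulr1n.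
  by rewrite -opprB hW oppr0.
Qed.

Lemma crit_fin {K : fieldType} (f g : {poly K}) (z : K) :
  (~ (root f z /\ root g z)) -> root (f^`() * g - f * g^`()) z -> critical_point f g (Some z).
Proof.
move=> nc /rootP hW; rewrite /critical_point.
have [g0|gn0] := eqVneq g.[z] 0.
- have f0 : f.[z] != 0.
    by apply/eqP => f0; apply: nc; split; apply/rootP.
  exists 0, 1, 1, 0; split; first by rewrite mul0r mul1r sub0r oppr_eq0 oner_eq0.
  rewrite /= !scale1r !scale0r add0r addr0.
  split => //.
  move: hW; rewrite !hornerE => hW.
  rewrite g0 mul0r subr0 mulrC; move: hW; rewrite g0 mulr0 sub0r => /eqP.
  by rewrite oppr_eq0 => /eqP.
- exists 1, 0, 0, 1; split; first by rewrite mul0r mul1r subr0 oner_eq0.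
  rewrite /= !scale1r !scale0r add0r addr0.
  split => //; by rewrite !hornerE in hW *.
Qed.

Lemma form_hyp (K : fieldType) (W : {poly K}) (c a : K) (m : nat) :
  W = c%:P * ('X - a%:P)^+m -> ('X - a%:P) * W^`() = W * (m%:R)%:P.
Proof.
move=> ->; rewrite deriv_mulC deriv_exp derivXsubC mul1r polyC_natr.
case: m => [|m]; first by rewrite !mulr0n !mulr0.
rewrite /= -mulr_natr exprS; ring.
Qed.

Lemma prod_const_m1 (K : fieldType) (I : eqType) (s : seq I) (F : I -> {poly K}) :
  (forall i, i \in s -> F i = -1) -> \prod_(i <- s) F i = ((-1) ^+ size s)%:P.
Proof.
elim: s => [|x s IH] hs; first by rewrite big_nil.
rewrite big_cons IH; last by move=> i hi; apply: hs; rewrite in_cons hi orbT.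
by rewrite hs ?mem_head // exprS polyCM polyCN.
Qed.

Lemma prod_const (K : fieldType) (I : eqType) (s : seq I) (F : I -> {poly K}) (P : {poly K}) :
  (forall i, i \in s -> F i = P) -> \prod_(i <- s) F i = P ^+ size s.
Proof.
elim: s => [|x s IH] hs; first by rewrite big_nil.
rewrite big_cons IH; last by move=> i hi; apply: hs; rewrite in_cons hi orbT.
by rewrite hs ?mem_head // exprS.
Qed.

Lemma prod_rev (K : fieldType) (s : seq K) :
  (forall r, r \in s -> r != 0) ->
  \prod_(r <- s) ('X - r%:P) = (\prod_(r <- s) r)%:P * \prod_(r <- s) ((r^-1)%:P * 'X - 1).
Proof.
elim: s => [|x s IH] hs; first by rewrite !big_nil mul1r.
rewrite !big_cons IH; last by move=> i hi; apply: hs; rewrite in_cons hi orbT.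
have x0 : x != 0 by apply: hs; rewrite mem_head.
rewrite polyCM.
have e : 'X - x%:P = x%:P * ((x^-1)%:P * 'X - 1).
  by rewrite mulrBr mulrA -polyCM mulfV // mul1r mulr1.
rewrite e; ring.
Qed.


Lemma size_map_le {aR rR : nzSemiRingType} (h : aR -> rR) (P : {poly aR}) :
  (size (map_poly h P) <= size P)%N.
Proof. by rewrite /map_poly; apply: size_poly. Qed.

Lemma absV_lt1 {R : realType} {k : fieldType} {abs : k -> R} (r : k) :
  nonarch_abs abs -> 1 < abs r -> abs r^-1 < 1.
Proof.
move=> H hr; have := H; case=> hp h hm _ _.
have r0 : r != 0 by apply/eqP => r0; move: hr; rewrite r0 (abs0 H) ltr10.
have e : abs r * abs r^-1 = 1 by rewrite -hm mulfV //; exact: abs1 H.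
have ar0 : 0 < abs r by apply: lt_trans hr.
have -> : abs r^-1 = (abs r)^-1.
  by apply: (mulfI (lt0r_neq0 ar0)); rewrite e mulfV // lt0r_neq0.
by rewrite invf_lt1.
Qed.

Lemma abs_expN1 {R : realType} {k : fieldType} {abs : k -> R} (n : nat) :
  nonarch_abs abs -> abs ((-1) ^+ n) <= 1.
Proof.
move=> H; elim: n => [|n IH]; first by rewrite expr0; exact: abs1_le.
by rewrite exprS absM1 // absN //; exact: abs1_le H.
Qed.


Lemma coefM_top1 {K : fieldType} (p q : {poly K}) (e : nat) :
  (size p <= e.+2)%N -> (size q <= e.+3)%N ->
  (p * q)`_(e + e).+3 = p`_e.+1 * q`_e.+2.
Proof.
move=> hp hq; rewrite coefM.
rewrite (bigD1 (inord e.+1)) //.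
have h2 : (e.+1 < (e + e).+4)%N by lia.
rewrite (inordK h2).
rewrite (_ : ((e + e).+3 - e.+1 = e.+2)%N); last by lia.
rewrite big1; first by rewrite /= addr0.
move=> j /andP [_ hj2].
have hj2' : (val j != e.+1).
  by apply: contraNneq hj2 => hj; apply/eqP/val_inj; rewrite /= inordK // -hj.
have [lt|ge] := ltnP (val j) e.+1.
  rewrite [q`_ _]nth_default ?mulr0 //; apply: (leq_trans hq).
  move: lt; clear hj2; case: j hj2' => j hj /= *; lia.
rewrite [p`_ _]nth_default ?mul0r //; apply: (leq_trans hp).
move: ge; clear hj2; case: j hj2' => j hj /= *; lia.
Qed.

Lemma W_top1 {K : fieldType} (F G : {poly K}) (e : nat) :
  (size F <= e.+3)%N -> (size G <= e.+3)%N ->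
  (F^`() * G - F * G^`())`_(e + e).+3 = 0.
Proof.
move=> hF hG.
have hF' : (size F^`() <= e.+2)%N by apply: (leq_trans (size_deriv_le F)); case: (size F) hF.
have hG' : (size G^`() <= e.+2)%N by apply: (leq_trans (size_deriv_le G)); case: (size G) hG.
rewrite coefB (coefM_top1 F^`() G e) // [F * _]mulrC (coefM_top1 G^`() F e) // !coef_deriv.
by rewrite !mulrnAl [G`_ _ * _]mulrC subrr.
Qed.

Lemma size_W_le {K : fieldType} (F G : {poly K}) (e : nat) :
  (size F <= e.+3)%N -> (size G <= e.+3)%N ->
  (size (F^`() * G - F * G^`())%R <= (e + e).+3)%N.
Proof.
move=> hF hG.
have hF' : (size F^`() <= e.+2)%N by apply: (leq_trans (size_deriv_le F)); case: (size F) hF.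
have hG' : (size G^`() <= e.+2)%N by apply: (leq_trans (size_deriv_le G)); case: (size G) hG.
have hs : (size (F^`() * G - F * G^`())%R <= (e + e).+4)%N.
  apply: (leq_trans (size_polyD _ _)); rewrite size_polyN geq_max; apply/andP; split.
    apply: (leq_trans (size_polyMleq _ _)).
    move: (size F^`()) (size G) hF' hG => a b ha hb; lia.
  apply: (leq_trans (size_polyMleq _ _)).
  move: (size F) (size G^`()) hF hG' => a b ha hb; lia.
have h0 := W_top1 F G e hF hG.
move: hs; set P := _ - _ => hs.
rewrite leq_eqVlt in hs; case/orP: hs => [/eqP hs|//].
exfalso; have : lead_coef P == 0 by rewrite lead_coefE hs /= h0.
rewrite lead_coef_eq0 => /eqP P0; move: hs; rewrite P0 size_poly0 //.
Qed.

Lemma prod_constK (K : fieldType) (I : eqType) (s : seq I) (F : I -> K) (x : K) :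
  (forall i, i \in s -> F i = x) -> \prod_(i <- s) F i = x ^+ size s.
Proof.
elim: s => [|y s IH] hs; first by rewrite big_nil.
rewrite big_cons IH; last by move=> i hi; apply: hs; rewrite in_cons hi orbT.
by rewrite hs ?mem_head // exprS.
Qed.

Lemma coef_neq0_size {K : fieldType} (P : {poly K}) i : P`_i != 0 -> (i < size P)%N.
Proof. by apply: contraNT; rewrite -leqNgt => /(nth_default 0) ->. Qed.


Theorem corollary1p7 (R : realType) (k : closedFieldType) (abs : k -> R)
  (kt : fieldType) (red : k -> kt) (p : nat)
  (f g : {poly k}) :
  nonarch_abs abs ->
  abs_complete abs ->
  residue_map abs red ->
  p \in [pchar kt] ->
  (forall z : k, ~ (root f z /\ root g z)) ->
  (forall i, abs f`_i <= 1) -> (forall i, abs g`_i <= 1) ->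
  (exists i, abs f`_i = 1 \/ abs g`_i = 1) ->
  (0 < rdeg f g)%N ->
  rdeg (map_poly red f) (map_poly red g) = rdeg f g ->
  (forall x y : option k, critical_point f g x -> critical_point f g y ->
     red_pt abs red x = red_pt abs red y) ->
  (rdeg f g %% p == 0)%N || (rdeg f g %% p == 1)%N.
Proof.
move=> H _ Hr pc nc hf hg _ hd0 hgood hcrit.
have pp := pcharf_prime pc.
have g0 : g != 0 by apply: contraTneq hd0 => ->; rewrite /rdeg eqxx.
have hdf := rdeg_closed _ _ _ nc g0.

case hd: (rdeg f g) => [|[|e]] in hd0 hgood hdf *.
- by [].
- by rewrite modn_small ?prime_gt1 // orbT.
have [hsf hsg hs] : [/\ (size f <= e.+3)%N, (size g <= e.+3)%N &
    (size f = e.+3 \/ size g = e.+3)].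
  by move: (size f) (size g) hdf => a b h; split; lia.
set ft := map_poly red f; set gt := map_poly red g.
have hsft : (size ft <= e.+3)%N := leq_trans (size_map_le _ _) hsf.
have hsgt : (size gt <= e.+3)%N := leq_trans (size_map_le _ _) hsg.
have [cop hst] := rdeg_cop _ _ _ _ hsft hsgt hgood (ltn0Sn _).
set W := f^`() * g - f * g^`().
have iW : intp abs W.
  by apply: intpB => //; apply: intpM => //; apply: intp_deriv.
have mW : map_poly red W = ft^`() * gt - ft * gt^`().
  rewrite /W (mapB _ _ H Hr); try (apply: intpM => //; apply: intp_deriv => //).
  rewrite !(mapM _ _ H Hr) //; try (apply: intp_deriv => //).
  by rewrite !(map_deriv _ H Hr).
have [c [a [m [hWt hm]]]] : exists c a m, map_poly red W = c%:P * ('X - a%:P)^+m /\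
   (m = 0 \/ m = 2 * e.+2 - 2)%N.
  have [W0|Wn0] := eqVneq W 0.
    by exists 0, 0, 0%N; split; [rewrite W0 map_poly0 mul0r | left].
  have [rs hrs] := closed_field_poly_normal W.
  have lc0 : lead_coef W != 0 by rewrite lead_coef_eq0.
  have rootrs : forall r, r \in rs -> root W r.
    by move=> r hr; rewrite hrs rootZ // root_prod_XsubC.
  have critrs : forall r, r \in rs -> critical_point f g (Some r).
    by move=> r hr; apply: crit_fin (nc r) (rootrs r hr).
  have ilc : abs (lead_coef W) <= 1 by rewrite lead_coefE; apply: iW.
  case: (boolP (has (fun r => abs r <= 1) rs)) => [/hasP [r0 r0in hr0] | /hasPn hall].
  - have hall : forall r, r \in rs -> abs r <= 1 /\ red r = red r0.
      move=> r hr; have := hcrit _ _ (critrs r hr) (critrs r0 r0in); rewrite /= hr0.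
      by case: ifP => // h [->].
    have hinf : W`_(e + e).+2 != 0.
      apply/eqP => h0; have := hcrit _ _ (crit_inf _ _ _ hd hsf hsg hs h0) (critrs r0 r0in).
      by rewrite /= hr0.
    have sW : size W = (e + e).+3.
      apply/eqP; rewrite eqn_leq size_W_le //=.
      exact: coef_neq0_size.
    have srs : size rs = (e + e).+2.
      by move: sW; rewrite {1}hrs size_scale // size_prod_XsubC => -[].
    exists (red (lead_coef W)), (red r0), (size rs); split; last by right; lia.
    have ip : forall r, r \in rs -> intp abs ('X - r%:P).
      move=> r hr; apply: intpB => //; [exact: intpX | apply: intpC => //].
      by case: (hall r hr).
    rewrite {1}hrs -mul_polyC (mapM _ _ H Hr); last 2 first.
    + exact: intpC.
    + exact: intp_prod.
    rewrite (mapC _ H Hr) (map_prod _ _ _ H Hr) //.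
    congr (_ * _); apply: prod_const => r hr.
    rewrite (mapB _ _ H Hr); [ | exact: intpX | by apply: intpC => //; case: (hall r hr)].
    by rewrite (mapX H Hr) (mapC _ H Hr); case: (hall r hr) => _ ->.
  - have hgt : forall r, r \in rs -> 1 < abs r.
      by move=> r hr; have := hall r hr; rewrite /= -ltNge.
    have rn0 : forall r, r \in rs -> r != 0.
      move=> r hr; apply/eqP => r0; have := hgt r hr; rewrite r0 (abs0 H).
      by rewrite ltr10.
    set Q := \prod_(r <- rs) ((r^-1)%:P * 'X - 1).
    set c := lead_coef W * \prod_(r <- rs) r.
    have hW2 : W = c%:P * Q.
      by rewrite {1}hrs -mul_polyC prod_rev // mulrA -polyCM.
    have iF : forall r, r \in rs -> intp abs ((r^-1)%:P * 'X - 1).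
      move=> r hr; apply: intpB => //.
        apply: intpM => //; last exact: intpX.
        by apply: intpC => //; apply: ltW; apply: absV_lt1 => //; apply: hgt.
      by rewrite -polyC1; apply: intpC => //; exact: abs1_le.
    have iQ : intp abs Q by apply: intp_prod.
    have mQ : map_poly red Q = ((-1) ^+ size rs)%:P.
      rewrite (map_prod _ _ _ H Hr) //; apply: prod_const_m1 => r hr.
      have := Hr; case=> _ _ h1 hz _.
      have rv0 : red r^-1 = 0.
        apply/eqP; rewrite hz; first by apply: absV_lt1 => //; apply: hgt.
        by apply: ltW; apply: absV_lt1 => //; apply: hgt.
      rewrite (mapB _ _ H Hr); [ | | by rewrite -polyC1; apply: intpC => //; exact: abs1_le].
        rewrite (mapM _ _ H Hr); [ | | exact: intpX].
          by rewrite -polyC1 !(mapC _ H Hr) (mapX H Hr) rv0 h1 mul0r sub0r.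
        by apply: intpC => //; apply: ltW; apply: absV_lt1 => //; apply: hgt.
      apply: intpM => //; last exact: intpX.
      by apply: intpC => //; apply: ltW; apply: absV_lt1 => //; apply: hgt.
    have Q0 : Q`_0 = (-1) ^+ size rs.
      rewrite -horner_coef0 horner_prod; apply: prod_constK => r hr.
      by rewrite !hornerE.
    have s2 : (-1) ^+ size rs * (-1) ^+ size rs = 1 :> k.
      by rewrite -exprD addnn -mul2n exprM sqrrN expr1n expr1n.
    have ec : c = W`_0 * (-1) ^+ size rs.
      by rewrite hW2 coefCM Q0 -mulrA s2 mulr1.
    have ic : abs c <= 1.
      by rewrite ec; apply: absM1 => //; apply: abs_expN1.
    exists (red c * (-1) ^+ size rs), 0, 0%N; split; last by left.
    rewrite hW2 (mapM _ _ H Hr) //; last exact: intpC.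
    by rewrite (mapC _ H Hr) mQ expr0 mulr1 polyCM.
apply: (kt_final _ _ _ _ a m e pc cop hst _ hm).
rewrite -mW; exact: (form_hyp _ _ _ _ _ hWt).
Qed.
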